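(* Let $X$ be an infinite discrete space and $G$ a subgroup of the permutation group $\mathrm S(X)$ with the permutation topology $\tau_\partial$. The following conditions are equivalent: (1) the maximal equiuniformity $\mathcal U_X$ on $X$ (for the action $G\curvearrowright X$) is totally bounded; (2) the action of $G$ on $X$ is oligomorphic; (3) for every $n\in\mathbb N$ the maximal equiuniformity $\mathcal U_{X^n}$ on $X^n$ for the diagonal action $G\curvearrowright X^n$ is totally bounded. If one of the equivalent conditions (1)–(3) holds, then $G$ is Roelcke precompact.
   Context: $\tau_\partial$: the group topology on $G$ with neighbourhood base of the identity the pointwise stabilizers $\mathrm{St}_F=\{g\in G\mid g(x)=x\ \forall x\in F\}$, $F\subset X$ finite. For a discrete set $Y$ on which $G$ acts (here $Y=X$ or $Y=X^n$ with $g(y_1,\dots,y_n)=(gy_1,\dots,gy_n)$), the maximal equiuniformity $\mathcal U_Y$ has as base the partitions $\{\mathrm{St}_F\,y\mid y\in Y\}$ of $Y$ into orbits of $\mathrm{St}_F$, where $F$ ranges over finite subsets of $Y$ and $\mathrm{St}_F$ is the pointwise stabilizer of $F$ in $G$. The action is oligomorphic if for every $n\in\mathbb N$ the diagonal action $G\curvearrowright X^n$ has finitely many orbits. $G$ is Roelcke precompact if its Roelcke uniformity (greatest lower bound of left and right uniformities, base $\{UgU\mid g\in G\}$) is totally bounded. *)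

(* Defs.v *)
From Stdlib Require Import List.
From Stdlib Require Vectors.Fin.
Import ListNotations.
Set Implicit Arguments.

Definition infinite_type (X : Type) : Prop :=
  ~ exists l : list X, forall x, In x l.

Definition bijective {X : Type} (f : X -> X) : Prop :=
  exists h : X -> X, (forall x, h (f x) = x) /\ (forall x, f (h x) = x).

Definition is_perm_subgroup {X : Type} (G : (X -> X) -> Prop) : Prop :=
  (forall g, G g -> bijective g) /\
  G (fun x => x) /\
  (forall g h, G g -> G h -> G (fun x => g (h x))) /\
  (forall g, G g -> exists h, G h /\ (forall x, h (g x) = x) /\ (forall x, g (h x) = x)).

Definition St {X Y : Type} (G : (X -> X) -> Prop) (act : (X -> X) -> Y -> Y)
  (F : list Y) (g : X -> X) : Prop :=
  G g /\ forall y, In y F -> act g y = y.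

(* Base entourage of U_Y: the partition of Y into St_F-orbits. *)
Definition orbit_entourage {X Y : Type} (G : (X -> X) -> Prop)
  (act : (X -> X) -> Y -> Y) (F : list Y) (y y' : Y) : Prop :=
  exists g, St G act F g /\ y' = act g y.

Definition max_equiunif_entourage {X Y : Type} (G : (X -> X) -> Prop)
  (act : (X -> X) -> Y -> Y) (E : Y -> Y -> Prop) : Prop :=
  exists F : list Y, forall y y', orbit_entourage G act F y y' -> E y y'.

Definition totally_bounded_unif {Y : Type} (Ent : (Y -> Y -> Prop) -> Prop) : Prop :=
  forall E, Ent E -> exists A : list Y, forall y, exists a, In a A /\ E a y.

Definition max_equiunif_totally_bounded {X Y : Type} (G : (X -> X) -> Prop)
  (act : (X -> X) -> Y -> Y) : Prop :=
  totally_bounded_unif (max_equiunif_entourage G act).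

Definition act_X {X : Type} (g : X -> X) (x : X) : X := g x.
Definition act_Xn {X : Type} (n : nat) (g : X -> X) (v : Fin.t n -> X) : Fin.t n -> X :=
  fun i => g (v i).

Definition finitely_many_orbits {X Y : Type} (G : (X -> X) -> Prop)
  (act : (X -> X) -> Y -> Y) : Prop :=
  exists L : list Y, forall y, exists w g, In w L /\ G g /\ act g w = y.

Definition oligomorphic {X : Type} (G : (X -> X) -> Prop) : Prop :=
  forall n : nat, finitely_many_orbits G (@act_Xn X n).

Definition tau_nbhd_id {X : Type} (G : (X -> X) -> Prop) (U : (X -> X) -> Prop) : Prop :=
  (forall g, U g -> G g) /\
  exists F : list X, forall g, St G (@act_X X) F g -> U g.

Definition roelcke_entourage_of {X : Type} (U : (X -> X) -> Prop) (g h : X -> X) : Prop :=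
  exists u1 u2, U u1 /\ U u2 /\ forall x, h x = u1 (g (u2 x)).

Definition roelcke_precompact {X : Type} (G : (X -> X) -> Prop) : Prop :=
  forall U, tau_nbhd_id G U ->
    exists A : list (X -> X), (forall a, In a A -> G a) /\
      forall g, G g -> exists a, In a A /\ roelcke_entourage_of U a g.

(* Main.v *)
Require Import Defs.
From Stdlib Require Import List.
From Stdlib Require Import Classical FunctionalExtensionality.
Import ListNotations.

Definition fmo {X Y : Type} (P : (X -> X) -> Prop) (act : (X -> X) -> Y -> Y) : Prop :=
  exists L : list Y, forall y, exists w g, In w L /\ P g /\ act g w = y.

Lemma TB_iff {X Y : Type} (G : (X -> X) -> Prop) (act : (X -> X) -> Y -> Y) :
  max_equiunif_totally_bounded G act <-> forall F, fmo (St G act F) act.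
Proof.
  split.
  - intros H F. destruct (H (orbit_entourage G act F)) as [A HA].
    + exists F; auto.
    + exists A. intros y. destruct (HA y) as [a [Ha [g [Hg ->]]]]. eauto.
  - intros H E [F HF]. destruct (H F) as [L HL]. exists L. intros y.
    destruct (HL y) as [w [g [Hw [Hg <-]]]]. exists w; split; auto.
    apply HF. exists g; auto.
Qed.

Lemma pick_list {A B : Type} (P : A -> B -> Prop) (L : list A) :
  exists C : list B, (forall c, In c C -> exists w, In w L /\ P w c) /\
    (forall w, In w L -> forall b, P w b -> exists c, In c C /\ P w c).
Proof.
  induction L as [|w L [C [H1 H2]]].
  - exists []. split; intros; simpl in *; tauto.
  - destruct (classic (exists b, P w b)) as [[b Hb]|Hn].
    + exists (b :: C). split.
      * intros c [<-|Hc]. exists w; simpl; auto.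
        destruct (H1 c Hc) as [w' [? ?]]. exists w'; simpl; auto.
      * intros w' [<-|Hw'] b' Hb'. exists b; simpl; auto.
        destruct (H2 w' Hw' b' Hb') as [c [? ?]]. exists c; simpl; auto.
    + exists C. split.
      * intros c Hc. destruct (H1 c Hc) as [w' [? ?]]. exists w'; simpl; auto.
      * intros w' [<-|Hw'] b' Hb'. exfalso; eauto. eauto.
Qed.

Lemma list_exists {A B : Type} (Q : A -> list B -> Prop) (L : list A) :
  (forall w, In w L -> exists l, Q w l) ->
  exists Cs : list (A * list B), forall w, In w L -> exists l, In (w, l) Cs /\ Q w l.
Proof.
  induction L as [|w L IH]; intros H.
  - exists []. intros w [].
  - destruct IH as [Cs HCs]. { intros; apply H; simpl; auto. }
    destruct (H w (or_introl eq_refl)) as [l Hl].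
    exists ((w, l) :: Cs). intros w' [<-|Hw'].
    + exists l; simpl; auto.
    + destruct (HCs w' Hw') as [l' [? ?]]. exists l'; simpl; auto.
Qed.

Definition tcons {X : Type} {n : nat} (x : X) (v : Fin.t n -> X) : Fin.t (S n) -> X :=
  fun i => Fin.caseS' i (fun _ => X) x v.
Definition ttail {X : Type} {n : nat} (v : Fin.t (S n) -> X) : Fin.t n -> X :=
  fun i => v (Fin.FS i).

Lemma tcons_eta {X : Type} {n : nat} (v : Fin.t (S n) -> X) : v = tcons (v Fin.F1) (ttail v).
Proof.
  apply functional_extensionality. intros i. pattern i. apply Fin.caseS'; reflexivity.
Qed.

Fixpoint fin_enum (n : nat) : list (Fin.t n) :=
  match n with 0 => [] | S m => Fin.F1 :: map Fin.FS (fin_enum m) end.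

Lemma fin_enum_In n (i : Fin.t n) : In i (fin_enum n).
Proof.
  induction n as [|n IH].
  - apply (Fin.case0 (fun i => In i (fin_enum 0)) i).
  - pattern i. apply Fin.caseS'.
    + simpl; auto.
    + intros q. simpl. right. apply in_map. apply IH.
Qed.

Fixpoint ltup {X : Type} (l : list X) : Fin.t (length l) -> X :=
  match l with
  | [] => fun i => Fin.case0 (fun _ => X) i
  | x :: l' => tcons x (ltup l')
  end.

Lemma ltup_In {X : Type} (l : list X) y : In y l -> exists i, ltup l i = y.
Proof.
  induction l as [|x l IH]; simpl; [tauto|].
  intros [<-|Hy].
  - exists Fin.F1. reflexivity.
  - destruct (IH Hy) as [i Hi]. exists (Fin.FS i). exact Hi.
Qed.

Section Main.

Lemma G_id {X : Type} (G : (X -> X) -> Prop) (HG : is_perm_subgroup G) : G (fun x => x).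
Proof. apply HG. Qed.

Lemma G_comp {X : Type} (G : (X -> X) -> Prop) (HG : is_perm_subgroup G) g h :
  G g -> G h -> G (fun x => g (h x)).
Proof. apply HG. Qed.

Lemma G_inv {X : Type} (G : (X -> X) -> Prop) (HG : is_perm_subgroup G) g :
  G g -> exists h, G h /\ (forall x, h (g x) = x) /\ (forall x, g (h x) = x).
Proof. apply HG. Qed.

Lemma key {X : Type} (G : (X -> X) -> Prop) (HG : is_perm_subgroup G) :
  oligomorphic G -> forall F0 n, fmo (St G (@act_X X) F0) (@act_Xn X n).
Proof.
  intros Hol F0. induction F0 as [|a F0 IH]; intros n.
  - destruct (Hol n) as [L HL]. exists L. intros y.
    destruct (HL y) as [w [g [? [? ?]]]]. exists w, g. split; auto. split; auto.
    split; auto. intros _ [].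
  - destruct (IH (S n)) as [L HL].
    set (P := fun (w : Fin.t (S n) -> X) (c : Fin.t n -> X) =>
      exists g0, St G (@act_X X) F0 g0 /\ g0 (w Fin.F1) = a /\ c = ttail (act_Xn g0 w)).
    destruct (pick_list P L) as [C [_ HC]].
    exists C. intros y.
    destruct (HL (tcons a y)) as [w [g [Hw [[Gg Hg] Hgw]]]].
    assert (Hga : g (w Fin.F1) = a).
    { change (act_Xn g w Fin.F1 = a). rewrite Hgw. reflexivity. }
    destruct (HC w Hw y) as [c [Hc [g0 [[Gg0 Hg0] [Hg0a ->]]]]].
    { exists g. split; [split; auto|split; auto]. rewrite Hgw. reflexivity. }
    destruct (@G_inv _ G HG _ Gg0) as [k [Gk [Hk1 Hk2]]].
    exists (ttail (act_Xn g0 w)), (fun x => g (k x)). split; auto. split.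
    + split. apply (@G_comp _ G HG); auto.
      intros z [<-|Hz]; unfold act_X.
      * rewrite <- Hg0a, Hk1. congruence.
      * assert (k z = z) as ->. { rewrite <- (Hg0 z Hz) at 1. apply Hk1. }
        apply Hg; auto.
    + apply functional_extensionality. intros i. unfold act_Xn, ttail.
      rewrite Hk1. change (act_Xn g w (Fin.FS i) = y i). rewrite Hgw. reflexivity.
Qed.

Lemma olig_TB1 {X : Type} (G : (X -> X) -> Prop) (HG : is_perm_subgroup G) :
  oligomorphic G -> max_equiunif_totally_bounded G (@act_X X).
Proof.
  intros Hol. apply TB_iff. intros F.
  destruct (@key _ G HG Hol F 1) as [L HL].
  exists (map (fun v => v Fin.F1) L). intros x.
  destruct (HL (fun _ => x)) as [w [g [Hw [Hg Hgw]]]].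
  exists (w Fin.F1), g. split; [apply (in_map (fun v => v Fin.F1)); auto|]. split; auto.
  change (act_Xn g w Fin.F1 = x). rewrite Hgw. reflexivity.
Qed.

Lemma olig_TBn {X : Type} (G : (X -> X) -> Prop) (HG : is_perm_subgroup G) :
  oligomorphic G -> forall n, max_equiunif_totally_bounded G (@act_Xn X n).
Proof.
  intros Hol n. apply TB_iff. intros F.
  destruct (@key _ G HG Hol (flat_map (fun v => map v (fin_enum n)) F) n) as [L HL].
  exists L. intros y. destruct (HL y) as [w [g [Hw [[Gg Hg] Hgw]]]].
  exists w, g. split; auto. split; auto. split; auto.
  intros v Hv. apply functional_extensionality. intros i. apply Hg.
  apply in_flat_map. exists v. split; auto. apply in_map. apply fin_enum_In.
Qed.

Lemma TBn_TB1 {X : Type} (G : (X -> X) -> Prop) :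
  max_equiunif_totally_bounded G (@act_Xn X 1) -> max_equiunif_totally_bounded G (@act_X X).
Proof.
  intros H. rewrite TB_iff in H. apply TB_iff. intros F.
  destruct (H (map (fun x (_ : Fin.t 1) => x) F)) as [L HL].
  exists (map (fun v => v Fin.F1) L). intros x.
  destruct (HL (fun _ => x)) as [w [g [Hw [[Gg Hg] Hgw]]]].
  exists (w Fin.F1), g. split; [apply (in_map (fun v => v Fin.F1)); auto|]. split.
  - split; auto. intros z Hz.
    assert (E := Hg (fun _ => z) (in_map (fun x (_ : Fin.t 1) => x) F z Hz)).
    exact (f_equal (fun f => f Fin.F1) E).
  - change (act_Xn g w Fin.F1 = x). rewrite Hgw. reflexivity.
Qed.

Lemma TB1_olig {X : Type} (G : (X -> X) -> Prop) (HG : is_perm_subgroup G) :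
  max_equiunif_totally_bounded G (@act_X X) -> oligomorphic G.
Proof.
  intros H. rewrite TB_iff in H. intros n. induction n as [|n IH].
  - exists [fun i => Fin.case0 (fun _ => X) i]. intros y.
    exists (fun i => Fin.case0 (fun _ => X) i), (fun x => x).
    split; [simpl; auto|]. split; [apply (@G_id _ G HG)|].
    apply functional_extensionality. intros i. apply (Fin.case0 (fun i => _ = y i) i).
  - destruct IH as [L HL].
    destruct (list_exists (fun w A => forall x, exists a h, In a A /\
       St G (@act_X X) (map w (fin_enum n)) h /\ h a = x) L) as [Cs HCs].
    { intros w _. destruct (H (map w (fin_enum n))) as [A HA]. exists A. exact HA. }
    exists (flat_map (fun p => map (fun a => tcons a (fst p)) (snd p)) Cs).
    intros y. destruct (HL (ttail y)) as [w [g [Hw [Gg Hgw]]]].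
    destruct (@G_inv _ G HG _ Gg) as [k [Gk [Hk1 Hk2]]].
    destruct (HCs w Hw) as [l [Hwl Hl]].
    destruct (Hl (k (y Fin.F1))) as [a [h [Ha [[Gh Hh] Hha]]]].
    exists (tcons a w), (fun x => g (h x)). split; [|split].
    + apply in_flat_map. exists (w, l). split; auto. simpl. apply (in_map (fun a => tcons a w)). auto.
    + apply (@G_comp _ G HG); auto.
    + apply functional_extensionality. intros i. pattern i. apply Fin.caseS'.
      * unfold act_Xn. simpl. rewrite Hha. apply Hk2.
      * intros q. unfold act_Xn. simpl. rewrite Hh.
        -- change (act_Xn g w q = ttail y q). rewrite Hgw. reflexivity.
        -- apply in_map. apply fin_enum_In.
Qed.

Lemma olig_roelcke {X : Type} (G : (X -> X) -> Prop) (HG : is_perm_subgroup G) :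
  oligomorphic G -> roelcke_precompact G.
Proof.
  intros Hol U [HUG [F HF]].
  set (tF := ltup F).
  destruct (@key _ G HG Hol F (length F)) as [L HL].
  set (P := fun (w : Fin.t (length F) -> X) (a : X -> X) =>
     G a /\ exists u, St G (@act_X X) F u /\ act_Xn u w = act_Xn a tF).
  destruct (pick_list P L) as [C [HC1 HC2]].
  exists C. split.
  { intros c Hc. destruct (HC1 c Hc) as [w [_ [? _]]]. auto. }
  intros g Gg.
  destruct (HL (act_Xn g tF)) as [w [h [Hw [[Gh Hh] Hhw]]]].
  destruct (HC2 w Hw g) as [a [Ha [Ga [u [[Gu Hu] Huw]]]]].
  { split; auto. exists h. split; [split|]; auto. }
  exists a. split; auto.
  destruct (@G_inv _ G HG _ Gu) as [ui [Gui [Hui1 Hui2]]].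
  destruct (@G_inv _ G HG _ Gh) as [hi [Ghi [Hhi1 Hhi2]]].
  destruct (@G_inv _ G HG _ Ga) as [ai [Gai [Hai1 Hai2]]].
  exists (fun x => h (ui x)), (fun x => ai (u (hi (g x)))).
  split; [|split].
  - apply HF. split. apply (@G_comp _ G HG); auto.
    intros y Hy. unfold act_X. assert (ui y = y) as ->.
    { rewrite <- (Hu y Hy) at 1. apply Hui1. }
    apply Hh; auto.
  - apply HF. split. apply (@G_comp _ G HG); auto. apply (@G_comp _ G HG); auto. apply (@G_comp _ G HG); auto.
    intros y Hy. unfold act_X. destruct (ltup_In F y Hy) as [i <-].
    assert (E1 : g (ltup F i) = h (w i)).
    { change (act_Xn g tF i = act_Xn h w i). rewrite Hhw. reflexivity. }
    assert (E2 : u (w i) = a (ltup F i)).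
    { change (act_Xn u w i = act_Xn a tF i). rewrite Huw. reflexivity. }
    rewrite E1, Hhi1, E2, Hai1. reflexivity.
  - intros x. rewrite Hai2, Hui1, Hhi2. reflexivity.
Qed.

End Main.

Theorem theorem3p1 (X : Type) (G : (X -> X) -> Prop)
  (HX : infinite_type X) (HG : is_perm_subgroup G) :
  (max_equiunif_totally_bounded G (@act_X X) <-> oligomorphic G) /\
  (oligomorphic G <->
     (forall n : nat, max_equiunif_totally_bounded G (@act_Xn X n))) /\
  ((max_equiunif_totally_bounded G (@act_X X) \/ oligomorphic G \/
    (forall n : nat, max_equiunif_totally_bounded G (@act_Xn X n))) ->
   roelcke_precompact G).
Proof.
  assert (H1 := @TB1_olig X G HG). assert (H2 := @olig_TB1 X G HG).
  assert (H3 := @olig_TBn X G HG). assert (H4 := @TBn_TB1 X G).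
  assert (H5 := @olig_roelcke X G HG).
  split; [split; auto|split].
  - split; auto.
  - intros [Ha|[Hb|Hc]]; apply H5; auto.
Qed.
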